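(* Let $C$ be a hereditary pointed coalgebra with Gabriel quiver $Q$. The following are equivalent: (1) $C$ is left f-qcF; (2) $C$ is right f-qcF; (3) $C$ is left qcF; (4) $C$ is right qcF; (5) $C$ is coFrobenius; (6) $C$ is cosemisimple; (7) $Q$ is discrete (has no arrows).
   Context: $\Bbbk$ is a field; all coalgebras are over $\Bbbk$. A coalgebra is pointed if all its simple subcoalgebras are one dimensional, and hereditary if homomorphic images of injective right (equivalently left) comodules are injective. The path coalgebra $\Bbbk Q$ of a quiver $Q$ has basis all paths of $Q$ (including trivial paths = vertices), with $\Delta(p)=\sum_{xy=p}x\otimes y$ ($xy$ = concatenation) and $\varepsilon(p)=1$ if $p$ is trivial and $0$ otherwise. It is known that every pointed hereditary coalgebra $C$ is isomorphic to $\Bbbk Q$ for a unique quiver $Q$, called the Gabriel quiver of $C$. The dual algebra $C^*$ has product $(fg)(x)=\sum f(x_1)g(x_2)$; right $C$-comodules (coaction $m\mapsto \sum m_0\otimes m_1$) are left $C^*$-modules via $f\rightharpoonup m=\sum m_0 f(m_1)$, and left $C$-comodules (coaction $m\mapsto\sum m_{-1}\otimes m_0$) are right $C^*$-modules via $m\leftharpoonup f=\sum f(m_{-1})m_0$; in particular $C$ is a left and a right $C^*$-module. $C$ is left (right) qcF if $C$ embeds as a left (right) $C^*$-module in a free left (right) $C^*$-module. $C$ is left f-qcF if every finite dimensional right $C$-comodule embeds as a left $C^*$-module in a free left $C^*$-module; right f-qcF if every finite dimensional left $C$-comodule embeds as a right $C^*$-module in a free right $C^*$-module. $C$ is coFrobenius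 if $C$ embeds in $C^*$ as a left $C^*$-module (equivalently, as a right $C^*$-module). $C$ is cosemisimple if it is a direct sum of simple subcoalgebras. *)

(* Defs.v *)
(* MathComp has no tensor product, so
   an element of U (x) V is represented by a finite list of pairs
   [:: (u1,v1); ...] (meaning sum_i u_i (x) v_i), and two such lists denote
   the same tensor iff every bilinear map out of U x V (into any K-vector
   space W) takes the same value on them -- this is exactly the universal
   property defining U (x) V. *)
From HB Require Import structures.
From mathcomp Require Import all_boot all_order all_algebra.
Set Implicit Arguments.
Unset Strict Implicit.
Unset Printing Implicit Defensive.
Import Order.TTheory GRing.Theory Num.Theory.
Local Open Scope ring_scope.

Section Coalgebras.
Variable K : fieldType.

Definition lin (U V : lmodType K) (f : U -> V) :=
  forall (a : K) (x y : U), f (a *: x + y) = a *: f x + f y.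
Definition linf (U : lmodType K) (f : U -> K) :=
  forall (a : K) (x y : U), f (a *: x + y) = a * f x + f y.

Definition bilin (U V W : lmodType K) (b : U -> V -> W) :=
  (forall v, lin (fun u => b u v)) /\ (forall u, lin (b u)).
Definition trilin (U V X W : lmodType K) (b : U -> V -> X -> W) :=
  [/\ forall v x, lin (fun u => b u v x),
      forall u x, lin (fun v => b u v x) &
      forall u v, lin (b u v)].

Definition teq2 (U V : lmodType K) (t1 t2 : seq (U * V)) :=
  forall (W : lmodType K) (b : U -> V -> W), bilin b ->
    \sum_(p <- t1) b p.1 p.2 = \sum_(p <- t2) b p.1 p.2.
Definition teq3 (U V X : lmodType K) (t1 t2 : seq (U * V * X)) :=
  forall (W : lmodType K) (b : U -> V -> X -> W), trilin b ->
    \sum_(p <- t1) b p.1.1 p.1.2 p.2 = \sum_(p <- t2) b p.1.1 p.1.2 p.2.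

Record coalg (C : lmodType K) := Coalg {
  Delta : C -> seq (C * C);
  eps : C -> K;
  Delta_lin : forall (a : K) (x y : C),
    teq2 (Delta (a *: x + y)) ([seq (a *: p.1, p.2) | p <- Delta x] ++ Delta y);
  eps_lin : linf eps;
  coassoc : forall c : C,
    teq3 (flatten [seq [seq (q.1, q.2, p.2) | q <- Delta p.1] | p <- Delta c])
         (flatten [seq [seq (p.1, q.1, q.2) | q <- Delta p.2] | p <- Delta c]);
  counitl : forall c : C, \sum_(p <- Delta c) eps p.1 *: p.2 = c;
  counitr : forall c : C, \sum_(p <- Delta c) eps p.2 *: p.1 = c
}.

Section OverC.
Variables (C : lmodType K) (cC : coalg C).
Local Notation D := (Delta cC).
Local Notation ep := (eps cC).

Record rcomod := RComod {
  rc_sort : lmodType K;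
  rc_rho : rc_sort -> seq (rc_sort * C);
  rc_rho_lin : forall (a : K) (x y : rc_sort),
    teq2 (rc_rho (a *: x + y)) ([seq (a *: p.1, p.2) | p <- rc_rho x] ++ rc_rho y);
  rc_coassoc : forall m : rc_sort,
    teq3 (flatten [seq [seq (q.1, q.2, p.2) | q <- rc_rho p.1] | p <- rc_rho m])
         (flatten [seq [seq (p.1, q.1, q.2) | q <- D p.2] | p <- rc_rho m]);
  rc_counit : forall m : rc_sort, \sum_(p <- rc_rho m) ep p.2 *: p.1 = m
}.

Record lcomod := LComod {
  lc_sort : lmodType K;
  lc_rho : lc_sort -> seq (C * lc_sort);
  lc_rho_lin : forall (a : K) (x y : lc_sort),
    teq2 (lc_rho (a *: x + y)) ([seq (p.1, a *: p.2) | p <- lc_rho x] ++ lc_rho y);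
  lc_coassoc : forall m : lc_sort,
    teq3 (flatten [seq [seq (q.1, q.2, p.2) | q <- D p.1] | p <- lc_rho m])
         (flatten [seq [seq (p.1, q.1, q.2) | q <- lc_rho p.2] | p <- lc_rho m]);
  lc_counit : forall m : lc_sort, \sum_(p <- lc_rho m) ep p.1 *: p.2 = m
}.

Definition rc_morph (M N : rcomod) (f : rc_sort M -> rc_sort N) :=
  lin f /\ forall m, teq2 (rc_rho (f m)) [seq (f p.1, p.2) | p <- rc_rho m].

Definition rc_injective (M : rcomod) :=
  forall (N N' : rcomod) (i : rc_sort N -> rc_sort N') (g : rc_sort N -> rc_sort M),
    rc_morph i -> injective i -> rc_morph g ->
    exists h : rc_sort N' -> rc_sort M, rc_morph h /\ forall n, h (i n) = g n.

Definition hereditary :=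
  forall (M N : rcomod) (f : rc_sort M -> rc_sort N),
    rc_morph f -> (forall n, exists m, f m = n) -> rc_injective M -> rc_injective N.

Definition subspace (P : C -> Prop) :=
  P 0 /\ forall (a : K) x y, P x -> P y -> P (a *: x + y).
Definition subcoalg (P : C -> Prop) :=
  subspace P /\ forall d, P d ->
    exists t : seq (C * C), (forall p, p \in t -> P p.1 /\ P p.2) /\ teq2 (D d) t.
Definition simple_subcoalg (P : C -> Prop) :=
  [/\ subcoalg P, exists d, P d /\ d != 0 &
      forall E : C -> Prop, subcoalg E -> (forall x, E x -> P x) ->
        (forall x, E x -> x = 0) \/ (forall x, P x -> E x)].
Definition one_dim (P : C -> Prop) :=
  exists x : C, x != 0 /\ forall d, P d <-> exists a : K, d = a *: x.
Definition pointed :=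
  forall P : C -> Prop, simple_subcoalg P -> one_dim P.

Definition cosemisimple :=
  exists (I : Type) (S : I -> C -> Prop),
    [/\ forall i, simple_subcoalg (S i),
        forall c : C, exists n (e : 'I_n -> I) (d : 'I_n -> C),
          (forall k, S (e k) (d k)) /\ c = \sum_(k < n) d k &
        forall n (e : 'I_n -> I) (d : 'I_n -> C), injective e ->
          (forall k, S (e k) (d k)) -> \sum_(k < n) d k = 0 -> forall k, d k = 0].

Definition cmul (f g : C -> K) (x : C) := \sum_(p <- D x) f p.1 * g p.2.

Definition rc_lact (M : rcomod) (f : C -> K) (m : rc_sort M) :=
  \sum_(p <- rc_rho m) f p.2 *: p.1.
Definition lc_ract (M : lcomod) (m : lc_sort M) (f : C -> K) :=
  \sum_(p <- lc_rho m) f p.1 *: p.2.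
Definition C_lact (f : C -> K) (c : C) := \sum_(p <- D c) f p.2 *: p.1.
Definition C_ract (c : C) (f : C -> K) := \sum_(p <- D c) f p.1 *: p.2.

(* M (with left C^dual-action act) embeds, as a left C^dual-module, into a free left
   C^dual-module (C^dual)^(I): phi m is a finitely supported family I -> C^dual. *)
Definition embeds_free_left (M : lmodType K) (act : (C -> K) -> M -> M) :=
  exists (I : Type) (phi : M -> I -> C -> K),
    [/\ forall m i, linf (phi m i),
        forall m, exists n (e : 'I_n -> I),
          forall i, (forall k, e k <> i) -> forall x, phi m i x = 0,
        forall (a : K) m m' i x, phi (a *: m + m') i x = a * phi m i x + phi m' i x,
        forall f m i x, linf f -> phi (act f m) i x = cmul f (phi m i) x &
        forall m m', (forall i x, phi m i x = phi m' i x) -> m = m'].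

Definition embeds_free_right (M : lmodType K) (act : M -> (C -> K) -> M) :=
  exists (I : Type) (phi : M -> I -> C -> K),
    [/\ forall m i, linf (phi m i),
        forall m, exists n (e : 'I_n -> I),
          forall i, (forall k, e k <> i) -> forall x, phi m i x = 0,
        forall (a : K) m m' i x, phi (a *: m + m') i x = a * phi m i x + phi m' i x,
        forall f m i x, linf f -> phi (act m f) i x = cmul (phi m i) f x &
        forall m m', (forall i x, phi m i x = phi m' i x) -> m = m'].

Definition findim (M : lmodType K) :=
  exists n (v : 'I_n -> M), forall m, exists a : 'I_n -> K,
    m = \sum_(k < n) a k *: v k.

Definition left_qcF := embeds_free_left C_lact.
Definition right_qcF := embeds_free_right C_ract.
Definition left_fqcF :=
  forall M : rcomod, findim (rc_sort M) -> embeds_free_left (@rc_lact M).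
Definition right_fqcF :=
  forall M : lcomod, findim (lc_sort M) -> embeds_free_right (@lc_ract M).

(* coFrobenius: C embeds in C^dual as a left C^dual-module *)
Definition coFrobenius :=
  exists phi : C -> C -> K,
    [/\ forall c, linf (phi c),
        forall (a : K) c c' x, phi (a *: c + c') x = a * phi c x + phi c' x,
        forall f c x, linf f -> phi (C_lact f c) x = cmul f (phi c) x &
        forall c c', (forall x, phi c x = phi c' x) -> c = c'].

End OverC.

Record quiver := Quiver {
  vert : Type;
  arr : Type;
  src : arr -> vert;
  tgt : arr -> vert
}.

Section Paths.
Variable Q : quiver.
(* a path is a start vertex v with a list of arrows a1 ... an, composable
   (src a1 = v, tgt ai = src a(i+1)); the empty list is the trivial path e_v *)
Definition qpath := (vert Q * seq (arr Q))%type.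
Fixpoint valid_from (v : vert Q) (s : seq (arr Q)) : Prop :=
  if s is a :: s' then src a = v /\ valid_from (tgt a) s' else True.
Definition valid_path (p : qpath) := valid_from p.1 p.2.
Definition path_end (v : vert Q) (s : seq (arr Q)) :=
  foldl (fun _ a => tgt a) v s.
(* all decompositions p = x y (x followed by y) *)
Definition decomps (p : qpath) : seq (qpath * qpath) :=
  [seq ((p.1, take i p.2), (path_end p.1 (take i p.2), drop i p.2))
  | i <- iota 0 (size p.2).+1].
Definition discrete := arr Q -> False.
End Paths.

(* (C, cC) is isomorphic, as a coalgebra, to the path coalgebra KQ: the
   isomorphism KQ -> C is given by the images b p of the basis of paths. *)
Definition iso_path_coalg (C : lmodType K) (cC : coalg C) (Q : quiver) :=
  exists b : qpath Q -> C,
    [/\ forall n (e : 'I_n -> qpath Q) (a : 'I_n -> K),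
          injective e -> (forall k, valid_path (e k)) ->
          \sum_(k < n) a k *: b (e k) = 0 -> forall k, a k = 0,
        forall c : C, exists n (e : 'I_n -> qpath Q) (a : 'I_n -> K),
          (forall k, valid_path (e k)) /\ c = \sum_(k < n) a k *: b (e k),
        forall p, valid_path p ->
          teq2 (Delta cC (b p)) [seq (b x.1, b x.2) | x <- decomps p] &
        forall p, valid_path p -> eps cC (b p) = (if p.2 is [::] then 1 else 0)].

End Coalgebras.

(* Main.v *)
Require Import Defs.
From HB Require Import structures.
From mathcomp Require Import all_boot all_order all_algebra.
From Stdlib Require Import ClassicalEpsilon Classical.
From mathcomp Require Import zify.
Set Implicit Arguments.
Unset Strict Implicit.
Unset Printing Implicit Defensive.
Import GRing.Theory.
Local Open Scope ring_scope.


Definition peq {T : Type} (x y : T) : bool :=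
  if excluded_middle_informative (x = y) then true else false.
Lemma peqP T (x y : T) : reflect (x = y) (peq x y).
Proof. rewrite /peq; case: excluded_middle_informative => h; by constructor. Qed.
Lemma peqT T (x : T) : peq x x. Proof. exact/peqP. Qed.
Lemma peqF T (x y : T) : x <> y -> peq x y = false.
Proof. by move=> h; apply/peqP. Qed.

Section Lin.
Variable K : fieldType.
Lemma linf0 (U : lmodType K) (F : U -> K) : linf F -> F 0 = 0.
Proof. move=> h; have := h 1 0 0; rewrite scale1r addr0 mul1r => e.
by apply: (addrI (F 0)); rewrite addr0 -e. Qed.
Lemma linfD (U : lmodType K) (F : U -> K) x y : linf F -> F (x + y) = F x + F y.
Proof. by move=> h; rewrite -{1}[x]scale1r h mul1r. Qed.
Lemma linfZ (U : lmodType K) (F : U -> K) a x : linf F -> F (a *: x) = a * F x.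
Proof. by move=> h; rewrite -[a *: x]addr0 h linf0 // addr0. Qed.
Lemma linf_sum (U : lmodType K) (F : U -> K) (I : Type) (l : seq I) G :
  linf F -> F (\sum_(i <- l) G i) = \sum_(i <- l) F (G i).
Proof.
move=> h; elim: l => [|i l IH]; first by rewrite !big_nil linf0.
by rewrite !big_cons linfD // IH.
Qed.
Lemma lin0 (U V : lmodType K) (F : U -> V) : lin F -> F 0 = 0.
Proof. move=> h; have := h 1 0 0; rewrite scale1r addr0 scale1r => e.
by apply: (addrI (F 0)); rewrite addr0 -e. Qed.
Lemma linD (U V : lmodType K) (F : U -> V) x y : lin F -> F (x + y) = F x + F y.
Proof. by move=> h; rewrite -{1}[x]scale1r h scale1r. Qed.
Lemma linZ (U V : lmodType K) (F : U -> V) a x : lin F -> F (a *: x) = a *: F x.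
Proof. by move=> h; rewrite -[a *: x]addr0 h lin0 // addr0. Qed.
Lemma lin_sum (U V : lmodType K) (F : U -> V) (I : Type) (l : seq I) G :
  lin F -> F (\sum_(i <- l) G i) = \sum_(i <- l) F (G i).
Proof.
move=> h; elim: l => [|i l IH]; first by rewrite !big_nil lin0.
by rewrite !big_cons linD // IH.
Qed.

Lemma teq2K (U V : lmodType K) (t1 t2 : seq (U * V)) (f : U -> K) (g : V -> K) :
  linf f -> linf g -> teq2 t1 t2 ->
  \sum_(p <- t1) f p.1 * g p.2 = \sum_(p <- t2) f p.1 * g p.2.
Proof.
move=> hf hg h; apply: (h (K^o) (fun u v => (f u * g v : K^o))); split.
- by move=> v a x y; rewrite /= hf mulrDl -mulrA.
- by move=> u a x y; rewrite /= hg mulrDr mulrCA.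
Qed.
Lemma teq2R (U V : lmodType K) (t1 t2 : seq (U * V)) (g : V -> K) :
  linf g -> teq2 t1 t2 ->
  \sum_(p <- t1) g p.2 *: p.1 = \sum_(p <- t2) g p.2 *: p.1.
Proof.
move=> hg h; apply: (h U (fun u v => g v *: u)); split.
- by move=> v a x y; rewrite /= scalerDr !scalerA mulrC.
- by move=> u a x y; rewrite /= hg scalerDl scalerA.
Qed.
Lemma teq2L (U V : lmodType K) (t1 t2 : seq (U * V)) (g : U -> K) :
  linf g -> teq2 t1 t2 ->
  \sum_(p <- t1) g p.1 *: p.2 = \sum_(p <- t2) g p.1 *: p.2.
Proof.
move=> hg h; apply: (h V (fun u v => g u *: v)); split.
- by move=> v a x y; rewrite /= hg scalerDl scalerA.
- by move=> u a x y; rewrite /= scalerDr !scalerA mulrC.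
Qed.
End Lin.


Section Basis.
Variables (K : fieldType) (C : lmodType K) (Q : quiver) (b : qpath Q -> C).
Hypothesis Hind : forall n (e : 'I_n -> qpath Q) (a : 'I_n -> K),
          injective e -> (forall k, valid_path (e k)) ->
          \sum_(k < n) a k *: b (e k) = 0 -> forall k, a k = 0.
Hypothesis Hspan : forall c : C, exists n (e : 'I_n -> qpath Q) (a : 'I_n -> K),
          (forall k, valid_path (e k)) /\ c = \sum_(k < n) a k *: b (e k).

Definition lc (l : seq (K * qpath Q)) : C := \sum_(p <- l) p.1 *: b p.2.
Definition uv (u : qpath Q -> K) (l : seq (K * qpath Q)) : K :=
  \sum_(p <- l) p.1 * u p.2.
Fixpoint allP (R : qpath Q -> Prop) (l : seq (K * qpath Q)) : Prop :=
  if l is p :: t then R p.2 /\ allP R t else True.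
Fixpoint nodupP (l : seq (K * qpath Q)) : Prop :=
  if l is p :: t then allP (fun q => q <> p.2) t /\ nodupP t else True.

Lemma allP_filter R (f : pred (K * qpath Q)) l : allP R l -> allP R (filter f l).
Proof. elim: l => //= p l IH [h1 h2]; case: (f p) => /=; [split; auto|auto]. Qed.
Lemma allP_filterN P l :
  allP (fun q => q <> P) (filter (fun q => ~~ peq q.2 P) l).
Proof.
elim: l => //= p l IH; case: (peqP p.2 P) => h //=.
Qed.
Lemma allP_map (I : Type) (s : seq I) (F : I -> K * qpath Q) R :
  (forall i, R (F i).2) -> allP R (map F s).
Proof. by move=> h; elim: s => //= i s IH; split. Qed.
Lemma allP_cat R l1 l2 : allP R l1 -> allP R l2 -> allP R (l1 ++ l2).
Proof. by elim: l1 => //= p l IH [h1 h2] h3; split; auto. Qed.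
Lemma allP_mapN R l : allP R l -> allP R [seq (- q.1, q.2) | q <- l].
Proof. by elim: l => //= p l IH [h1 h2]; split; auto. Qed.
Lemma allP_mapZ R a l : allP R l -> allP R [seq (a * q.1, q.2) | q <- l].
Proof. by elim: l => //= p l IH [h1 h2]; split; auto. Qed.

Lemma normalize l : exists l', (forall R, allP R l -> allP R l') /\
  (forall u, uv u l' = uv u l) /\ lc l' = lc l /\ nodupP l'.
Proof.
move: {2}(size l) (leqnn (size l)) => n; elim: n l => [|n IH] [|[a P] t] //=.
- by move=> _; exists [::].
- by move=> _; exists [::].
move=> hs.
set t2 := filter (fun q => ~~ peq q.2 P) t.
have hs2 : (size t2 <= n)%N.
  by rewrite size_filter; apply: leq_trans (count_size _ _) _; rewrite -ltnS.
have [l2 [h1 [h2 [h3 h4]]]] := IH t2 hs2.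
exists ((a + \sum_(q <- t | peq q.2 P) q.1, P) :: l2); split; last split; last split.
- by move=> R /= [r1 r2]; split=> //; apply: h1; apply: allP_filter.
- move=> u; rewrite /uv !big_cons /= -/(uv u l2) h2 /uv big_filter.
  rewrite mulrDl -addrA; congr (_ + _).
  rewrite [in RHS](bigID (fun q => peq q.2 P)) /=; congr (_ + _).
  by rewrite mulr_suml; apply: eq_bigr => q /peqP ->.
- rewrite /lc !big_cons /= -/(lc l2) h3 /lc big_filter.
  rewrite scalerDl -addrA; congr (_ + _).
  rewrite [in RHS](bigID (fun q => peq q.2 P)) /=; congr (_ + _).
  by rewrite scaler_suml; apply: eq_bigr => q /peqP ->.
- split=> //=; apply: h1; exact: allP_filterN.
Qed.

Lemma nodup_nth l d i j : nodupP l -> (i < size l)%N -> (j < size l)%N ->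
  (nth d l i).2 = (nth d l j).2 -> i = j.
Proof.
elim: l i j => //= p l IH [|i] [|j] //= [h1 h2] hi hj.
- move=> e; exfalso.
  have : forall k, (k < size l)%N -> (nth d l k).2 <> p.2.
    elim: (l) h1 {IH h2 hi hj e} => //= q l' IH' [g1 g2] [|k] //= hk; auto.
  by move/(_ j hj); rewrite e.
- move=> e; exfalso.
  have : forall k, (k < size l)%N -> (nth d l k).2 <> p.2.
    elim: (l) h1 {IH h2 hi hj e} => //= q l' IH' [g1 g2] [|k] //= hk; auto.
  by move/(_ i hi); rewrite e.
- by move=> e; congr _.+1; apply: IH.
Qed.

Lemma allP_nth R l d j : allP R l -> (j < size l)%N -> R (nth d l j).2.
Proof. by elim: l j => //= p l IH [|j] [h1 h2] //= hj; apply: IH. Qed.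

Lemma lc0 l : nodupP l -> allP (@valid_path Q) l -> lc l = 0 -> forall u, uv u l = 0.
Proof.
case: l => [|p0 l'] hn hv h0 u; first by rewrite /uv big_nil.
set l := p0 :: l' in hn hv h0 *.
have hz := Hind (e := fun k : 'I_(size l) => (nth p0 l k).2)
  (a := fun k : 'I_(size l) => (nth p0 l k).1).
have {}hz : forall k : 'I_(size l), (nth p0 l k).1 = 0.
  apply: hz.
  - by move=> i j /(nodup_nth hn (ltn_ord i) (ltn_ord j)) /val_inj.
  - by move=> k; apply: allP_nth.
  - by apply: etrans h0; rewrite /lc [RHS](big_nth p0) big_mkord.
rewrite /uv (big_nth p0) big_mkord big1 // => k _.
by rewrite hz mul0r.
Qed.

Lemma wd l1 l2 u : allP (@valid_path Q) l1 -> allP (@valid_path Q) l2 -> lc l1 = lc l2 ->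
  uv u l1 = uv u l2.
Proof.
move=> h1 h2 e.
set l := l1 ++ [seq (- q.1, q.2) | q <- l2].
have [l' [g1 [g2 [g3 g4]]]] := normalize l.
have hv : allP (@valid_path Q) l' by apply: g1; apply: allP_cat => //; apply: allP_mapN.
have : lc l' = 0.
  by rewrite g3 /lc big_cat big_map /= -/(lc l1) e /lc -big_split /= big1 // => q _;
     rewrite scaleNr addrN.
move/(lc0 g4 hv)/(_ u); rewrite g2 /uv big_cat big_map /=.
move/eqP; rewrite addr_eq0 => /eqP ->.
by rewrite -sumrN; apply: eq_bigr => q _; rewrite mulNr opprK.
Qed.

Lemma exrep c : exists l, allP (@valid_path Q) l /\ lc l = c.
Proof.
have [n [e [a [hv ->]]]] := Hspan c.
exists [seq (a k, e k) | k <- index_enum 'I_n]; split.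
  by apply: allP_map.
by rewrite /lc big_map.
Qed.

Definition rep c : seq (K * qpath Q) :=
  proj1_sig (constructive_indefinite_description _ (exrep c)).
Lemma rep_valid c : allP (@valid_path Q) (rep c).
Proof. rewrite /rep; case: constructive_indefinite_description => l [] //. Qed.
Lemma rep_lc c : lc (rep c) = c.
Proof. rewrite /rep; case: constructive_indefinite_description => l [] //. Qed.

Definition Fu (u : qpath Q -> K) (c : C) : K := uv u (rep c).

Lemma Fu_lin u : linf (Fu u).
Proof.
move=> a x y; rewrite /Fu.
set l := [seq (a * q.1, q.2) | q <- rep x] ++ rep y.
have hl : allP (@valid_path Q) l by apply: allP_cat; [apply: allP_mapZ|]; apply: rep_valid.
rewrite (@wd _ l u (rep_valid _) hl).
- rewrite /uv big_cat big_map /= mulr_sumr; congr (_ + _).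
  by apply: eq_bigr => q _; rewrite mulrA.
- rewrite rep_lc /lc big_cat big_map /= -/(lc (rep y)) rep_lc; congr (_ + _).
  rewrite -{1}(rep_lc x) /lc scaler_sumr.
  by apply: eq_bigr => q _; rewrite scalerA.
Qed.

Lemma Fu_b u p : valid_path p -> Fu u (b p) = u p.
Proof.
move=> hp; rewrite /Fu (@wd _ [:: (1, p)]).
- by rewrite /uv big_cons big_nil /= mul1r addr0.
- exact: rep_valid.
- by [].
- by rewrite rep_lc /lc big_cons big_nil /= scale1r addr0.
Qed.

Definition ind (q r : qpath Q) : K := if peq r q then 1 else 0.

Lemma uv_ind0 P t : allP (fun q => q <> P) t -> uv (ind P) t = 0.
Proof.
elim: t => [|p t IH]; first by rewrite /uv big_nil.
move=> /= [h1 h2]; rewrite /uv big_cons -/(uv _ t) IH // /ind peqF // mulr0 addr0 //.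
Qed.

Lemma coord_zero_l l : nodupP l -> allP (@valid_path Q) l ->
  (forall q, valid_path q -> uv (ind q) l = 0) -> lc l = 0.
Proof.
elim: l => [|[a P] t IH]; first by rewrite /lc big_nil.
move=> /= [n1 n2] [v1 v2] h.
have ha : a = 0.
  by have := h P v1; rewrite /uv big_cons -/(uv (ind P) t) uv_ind0 // /ind /= peqT mulr1 addr0.
rewrite /lc big_cons -/(lc t) IH //= ?ha ?scale0r ?add0r //.
move=> q hq; have := h q hq.
by rewrite /uv big_cons -/(uv (ind q) t) /= ha mul0r add0r.
Qed.

Lemma coord_zero c : (forall q, valid_path q -> Fu (ind q) c = 0) -> c = 0.
Proof.
move=> h; have [l' [g1 [g2 [g3 g4]]]] := normalize (rep c).
rewrite -(rep_lc c) -g3; apply: coord_zero_l => //.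
  by apply: g1; apply: rep_valid.
by move=> q hq; rewrite g2; apply: h.
Qed.

Lemma basis_zero (F : C -> K) c : linf F ->
  (forall q, valid_path q -> F (b q) = 0) -> F c = 0.
Proof.
move=> hF h; have [n [e [a [hv ->]]]] := Hspan c.
rewrite linf_sum // big1 // => k _; rewrite linfZ // h // mulr0 //.
Qed.

Lemma basis_eq (F G : C -> K) c : linf F -> linf G ->
  (forall q, valid_path q -> F (b q) = G (b q)) -> F c = G c.
Proof.
move=> hF hG h; apply/eqP; rewrite -subr_eq0; apply/eqP.
apply: (@basis_zero (fun c => F c - G c)).
  by move=> a x y; rewrite hF hG mulrBr; rewrite addrACA opprD.
by move=> q hq; rewrite h // subrr.
Qed.

End Basis.


Section PathLemmas.
Variable Q : quiver.

Lemma decomps_head (u : vert Q) (s : seq (arr Q)) :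
  decomps (u, s) = ((u, [::]), (u, s)) ::
   [seq ((u, take i.+1 s), (path_end u (take i.+1 s), drop i.+1 s)) | i <- iota 0 (size s)].
Proof.
rewrite /decomps /= take0 drop0; congr (_ :: _).
by rewrite -[1%N]/(1 + 0)%N iotaDl -map_comp.
Qed.

Lemma decomps_last (u : vert Q) (s : seq (arr Q)) :
  decomps (u, s) =
   [seq ((u, take i s), (path_end u (take i s), drop i s)) | i <- iota 0 (size s)]
   ++ [:: ((u, s), (path_end u s, [::]))].
Proof.
by rewrite /decomps -addn1 iotaD map_cat /= take_size drop_size.
Qed.

Lemma decomps_rcons (u : vert Q) (s : seq (arr Q)) a :
  decomps (u, rcons s a) =
   [seq ((u, take i s), (path_end u (take i s), rcons (drop i s) a)) | i <- iota 0 (size s)]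
   ++ [:: ((u, s), (path_end u s, [:: a])); ((u, rcons s a), (path_end u (rcons s a), [::]))].
Proof.
rewrite decomps_last size_rcons -addn1 iotaD map_cat -catA /=.
rewrite -cats1 add0n drop_size_cat // take_size_cat //; congr (_ ++ _).
apply/eq_in_map => i; rewrite mem_iota add0n => hi.
by rewrite takel_cat ?(ltnW hi) // drop_cat; case: ifP hi => // _ _; rewrite cats1.
Qed.

Lemma valid_take_drop (u : vert Q) (s : seq (arr Q)) i :
  valid_from u s -> valid_from u (take i s) /\
                    valid_from (path_end u (take i s)) (drop i s).
Proof.
elim: s u i => [|a s IH] u [|i] //= [h1 h2]; split=> //.
- by case: (IH (tgt a) i h2).
- by case: (IH (tgt a) i h2).
Qed.

Lemma valid_rcons (u : vert Q) (s : seq (arr Q)) a :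
  valid_from u s -> src a = path_end u s -> valid_from u (rcons s a).
Proof.
elim: s u => [|a' s IH] u /=; first by move=> _ ->.
by move=> [h1 h2] h3; split => //; apply: IH.
Qed.

Lemma path_end_rcons (u : vert Q) s a : path_end u (rcons s a) = tgt a.
Proof. by rewrite /path_end foldl_rcons. Qed.

End PathLemmas.

Section Coal.
Variables (K : fieldType) (C : lmodType K) (cC : coalg C) (Q : quiver)
  (b : qpath Q -> C).
Hypothesis Hind : forall n (e : 'I_n -> qpath Q) (a : 'I_n -> K),
          injective e -> (forall k, valid_path (e k)) ->
          \sum_(k < n) a k *: b (e k) = 0 -> forall k, a k = 0.
Hypothesis Hspan : forall c : C, exists n (e : 'I_n -> qpath Q) (a : 'I_n -> K),
          (forall k, valid_path (e k)) /\ c = \sum_(k < n) a k *: b (e k).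
Hypothesis HDelta : forall p, valid_path p ->
          teq2 (Delta cC (b p)) [seq (b x.1, b x.2) | x <- decomps p].
Hypothesis Heps : forall p, valid_path p -> eps cC (b p) = (if p.2 is [::] then 1 else 0).

Local Notation ind := (ind K (Q:=Q)).
Definition delta (r : qpath Q) : C -> K := Fu Hspan (ind r).
Lemma delta_lin r : linf (delta r). Proof. exact: Fu_lin. Qed.
Lemma delta_b r p : valid_path p -> delta r (b p) = ind r p.
Proof. exact: Fu_b. Qed.

Lemma ind_size (r q : qpath Q) : size q.2 != size r.2 -> ind r q = 0.
Proof. by move=> h; rewrite /ind peqF // => e; move: h; rewrite e eqxx. Qed.
Lemma ind_refl (r : qpath Q) : ind r r = 1 :> K.
Proof. by rewrite /ind peqT. Qed.

Lemma eq_sum_decomps p (F G : qpath Q * qpath Q -> K) : valid_path p ->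
  (forall q, valid_path q.1 -> valid_path q.2 -> F q = G q) ->
  \sum_(q <- decomps p) F q = \sum_(q <- decomps p) G q.
Proof.
move=> hp h; rewrite /decomps !big_map big_seq [RHS]big_seq.
apply: eq_bigr => i _; have [h1 h2] := valid_take_drop i hp.
by apply: h.
Qed.

Lemma cmul_b f g p : linf f -> linf g -> valid_path p ->
  cmul cC f g (b p) = \sum_(q <- decomps p) f (b q.1) * g (b q.2).
Proof. by move=> hf hg hp; rewrite /cmul (teq2K hf hg (HDelta hp)) big_map. Qed.

Lemma cmul_lin f g : linf f -> linf g -> linf (cmul cC f g).
Proof.
move=> hf hg a x y; rewrite /cmul (teq2K hf hg (Delta_lin cC a x y)).
rewrite big_cat big_map /= mulr_sumr; congr (_ + _).
by apply: eq_bigr => p _; rewrite linfZ // mulrA.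
Qed.

Lemma lact_triv f v : linf f ->
  C_lact cC f (b (v, [::])) = f (b (v, [::])) *: b (v, [::]).
Proof.
move=> hf; rewrite /C_lact (teq2R hf (HDelta (p := (v, [::])) I)).
by rewrite /decomps /= big_cons big_nil addr0.
Qed.
Lemma ract_triv f v : linf f ->
  C_ract cC (b (v, [::])) f = f (b (v, [::])) *: b (v, [::]).
Proof.
move=> hf; rewrite /C_ract (teq2L hf (HDelta (p := (v, [::])) I)).
by rewrite /decomps /= big_cons big_nil addr0.
Qed.

Lemma left_vanish (a : arr Q) (H : C -> K) : linf H ->
  (forall f, linf f -> forall y, cmul cC f H y = f (b (tgt a, [::])) * H y) ->
  forall c, H c = 0.
Proof.
move=> hH hrel c; apply: (basis_zero Hspan) => // -[u s] hq.
case: (classic (u = tgt a)) => [eu|nu].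
- subst u.
  have hy : valid_path (src a, a :: s) by split.
  have := hrel _ (delta_lin (src a, [:: a])) (b (src a, a :: s)).
  rewrite cmul_b //; last exact: delta_lin.
  rewrite (@eq_sum_decomps _ _ (fun q => ind (src a, [:: a]) q.1 * H (b q.2))) //;
    last by move=> q h1 h2; rewrite delta_b.
  rewrite delta_b // ind_size // mul0r decomps_head big_cons ind_size // mul0r add0r.
  rewrite /= big_cons /= take0 drop0 ind_refl mul1r big_map big1_seq ?addr0 //.
  move=> i /andP[_]; rewrite mem_iota => /andP[hi1 hi2] /=.
  rewrite ind_size ?mul0r //= size_take.
  case: ifP => h; move: hi1 hi2 h; lia.
- have := hrel _ (delta_lin (u, [::])) (b (u, s)).
  rewrite cmul_b //; last exact: delta_lin.
  rewrite (@eq_sum_decomps _ _ (fun q => ind (u, [::]) q.1 * H (b q.2))) //;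
    last by move=> q h1 h2; rewrite delta_b.
  rewrite delta_b // /ind peqF; last by case=> e; apply: nu.
  rewrite mul0r decomps_head big_cons /= peqT mul1r big_map big1_seq ?addr0 //.
  move=> i /andP[_]; rewrite mem_iota => /andP[hi1 hi2] /=.
  rewrite -/(ind (u, [::]) (u, take i.+1 s)) ind_size ?mul0r //= size_take.
  by case: ifP => h; move: hi2 h; lia.
Qed.

Lemma right_vanish (a : arr Q) (G : C -> K) : linf G ->
  (forall f, linf f -> forall y, cmul cC G f y = f (b (src a, [::])) * G y) ->
  forall c, G c = 0.
Proof.
move=> hG hrel c; apply: (basis_zero Hspan) => // -[u s] hq.
case: (classic (path_end u s = src a)) => [ez|nz].
- have hy : valid_path (u, rcons s a) by apply: valid_rcons.
  have := hrel _ (delta_lin (src a, [:: a])) (b (u, rcons s a)).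
  rewrite cmul_b //; last exact: delta_lin.
  rewrite (@eq_sum_decomps _ _ (fun q => G (b q.1) * ind (src a, [:: a]) q.2)) //;
    last by move=> q h1 h2; rewrite delta_b.
  rewrite delta_b // ind_size // mul0r (decomps_rcons u s a) big_cat big_map.
  rewrite big1_seq ?add0r; last first.
    move=> i /andP[_]; rewrite mem_iota => /andP[_ hi] /=.
    rewrite ind_size ?mulr0 //= size_rcons size_drop.
    by move: hi; lia.
  by rewrite !big_cons big_nil /= add0r ez ind_refl mulr1 ind_size // mulr0 !addr0.
- have := hrel _ (delta_lin (path_end u s, [::])) (b (u, s)).
  rewrite cmul_b //; last exact: delta_lin.
  rewrite (@eq_sum_decomps _ _ (fun q => G (b q.1) * ind (path_end u s, [::]) q.2)) //;
    last by move=> q h1 h2; rewrite delta_b.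
  rewrite delta_b // /ind peqF; last by case=> e; apply: nz; rewrite e.
  rewrite mul0r decomps_last big_cat big_map big1_seq ?add0r; last first.
    move=> i /andP[_]; rewrite mem_iota => /andP[_ hi] /=.
    rewrite -/(ind (path_end u s, [::]) (path_end u (take i s), drop i s)).
    rewrite ind_size ?mulr0 //= size_drop.
    by move: hi; lia.
  by rewrite big_cons big_nil /= add0r peqT mulr1 addr0.
Qed.

Lemma b_neq0 p : valid_path p -> b p != 0.
Proof.
move=> hp; apply/eqP => e.
have : (1 : K) = 0.
  apply: (Hind (e := fun _ : 'I_1 => p) (a := fun _ => 1) _ _ _ ord0) => //.
  - by move=> i j _; rewrite (ord1 i) (ord1 j).
  - by rewrite big_ord1 e scaler0.
by move/eqP; rewrite oner_eq0.
Qed.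

Lemma fam0 (M : lmodType K) (I : Type) (phi : M -> I -> C -> K) :
  (forall (a : K) m m' i x, phi (a *: m + m') i x = a * phi m i x + phi m' i x) ->
  (forall i x, phi 0 i x = 0) /\ (forall a m i x, phi (a *: m) i x = a * phi m i x).
Proof.
move=> h; have h0 : forall i x, phi 0 i x = 0.
  move=> i x; have := h 1 0 0 i x; rewrite scale1r addr0 mul1r => e.
  by apply: (addrI (phi 0 i x)); rewrite addr0 -e.
split=> // a m i x; by rewrite -[a *: m]addr0 h h0 addr0.
Qed.

Lemma lqcF_disc : left_qcF cC -> discrete Q.
Proof.
move=> [I [phi [hl _ hadd hmod hinj]]] a.
have [h0 hZ] := fam0 hadd.
have hv : valid_path (tgt a, [::] : seq (arr Q)) by [].
have hz : forall i x, phi (b (tgt a, [::])) i x = 0.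
  move=> i; apply: (@left_vanish a) => // f hf y.
  by rewrite -hmod // lact_triv // hZ.
by move/eqP: (b_neq0 hv); apply; apply: hinj => i x; rewrite hz h0.
Qed.

Lemma cofrob_disc : coFrobenius cC -> discrete Q.
Proof.
move=> [phi [hl hadd hmod hinj]] a.
have [h0 hZ] := @fam0 C unit (fun c _ => phi c) (fun a m m' _ x => hadd a m m' x).
have hv : valid_path (tgt a, [::] : seq (arr Q)) by [].
have hz : forall x, phi (b (tgt a, [::])) x = 0.
  apply: (@left_vanish a) => // f hf y.
  by rewrite -hmod // lact_triv // (hZ _ _ tt).
by move/eqP: (b_neq0 hv); apply; apply: hinj => x; rewrite hz (h0 tt).
Qed.

Lemma rqcF_disc : right_qcF cC -> discrete Q.
Proof.
move=> [I [phi [hl _ hadd hmod hinj]]] a.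
have [h0 hZ] := fam0 hadd.
have hv : valid_path (src a, [::] : seq (arr Q)) by [].
have hz : forall i x, phi (b (src a, [::])) i x = 0.
  move=> i; apply: (@right_vanish a) => // f hf y.
  by rewrite -hmod // ract_triv // hZ.
by move/eqP: (b_neq0 hv); apply; apply: hinj => i x; rewrite hz h0.
Qed.

Section Mods.
Variable h : C.
Hypothesis Hh : teq2 (Delta cC h) [:: (h, h)].
Hypothesis Heh : eps cC h = 1.

Definition rho1 (t : K^o) : seq (K^o * C) := [:: (t, h)].
Lemma rho1_lin (a : K) (x y : K^o) :
  teq2 (rho1 (a *: x + y)) ([seq (a *: p.1, p.2) | p <- rho1 x] ++ rho1 y).
Proof.
move=> W be [hb1 hb2]; rewrite /rho1 /= !big_cons !big_nil /=.
by rewrite (hb1 h) (linZ _ _ (hb1 h)) !addr0.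
Qed.
Lemma rho1_coassoc (m : K^o) :
  teq3 (flatten [seq [seq (q.1, q.2, p.2) | q <- rho1 p.1] | p <- rho1 m])
       (flatten [seq [seq (p.1, q.1, q.2) | q <- Delta cC p.2] | p <- rho1 m]).
Proof.
move=> W ga [g1 g2 g3]; rewrite /rho1 /= cats0 big_map big_cons big_nil addr0 /=.
rewrite (@Hh _ (fun c d => ga m c d)); first by rewrite big_cons big_nil addr0.
split.
- by move=> v; apply: g2.
- by move=> u; apply: g3.
Qed.
Lemma rho1_counit (m : K^o) : \sum_(p <- rho1 m) eps cC p.2 *: p.1 = m.
Proof. by rewrite /rho1 big_cons big_nil addr0 /= Heh scale1r. Qed.
Definition M1 : rcomod cC := RComod rho1_lin rho1_coassoc rho1_counit.

Definition lam1 (t : K^o) : seq (C * K^o) := [:: (h, t)].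
Lemma lam1_lin (a : K) (x y : K^o) :
  teq2 (lam1 (a *: x + y)) ([seq (p.1, a *: p.2) | p <- lam1 x] ++ lam1 y).
Proof.
move=> W be [hb1 hb2]; rewrite /lam1 /= !big_cons !big_nil /=.
by rewrite (hb2 h) (linZ _ _ (hb2 h)) !addr0.
Qed.
Lemma lam1_coassoc (m : K^o) :
  teq3 (flatten [seq [seq (q.1, q.2, p.2) | q <- Delta cC p.1] | p <- lam1 m])
       (flatten [seq [seq (p.1, q.1, q.2) | q <- lam1 p.2] | p <- lam1 m]).
Proof.
move=> W ga [g1 g2 g3]; rewrite /lam1 /= cats0 big_map big_cons big_nil addr0 /=.
rewrite (@Hh _ (fun c d => ga c d m)); first by rewrite big_cons big_nil addr0.
split.
- by move=> v; apply: g1.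
- by move=> u; apply: g2.
Qed.
Lemma lam1_counit (m : K^o) : \sum_(p <- lam1 m) eps cC p.1 *: p.2 = m.
Proof. by rewrite /lam1 big_cons big_nil addr0 /= Heh scale1r. Qed.
Definition N1 : lcomod cC := LComod lam1_lin lam1_coassoc lam1_counit.

Lemma findimK : findim (K^o).
Proof.
exists 1%N, (fun _ => 1) => m; exists (fun _ => m).
by rewrite big_ord1 /GRing.scale /= mulr1.
Qed.
End Mods.

Lemma lfqcF_disc : left_fqcF cC -> discrete Q.
Proof.
move=> hf a.
pose h := b (tgt a, [::]).
have Hh : teq2 (Delta cC h) [:: (h, h)] := HDelta (p := (tgt a, [::])) I.
have Heh : eps cC h = 1 := Heps (p := (tgt a, [::])) I.
have [I [phi [hl _ hadd hmod hinj]]] := hf (M1 Hh Heh) findimK.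
have [h0 hZ] := fam0 hadd.
have hz : forall i x, phi 1 i x = 0.
  move=> i; apply: (@left_vanish a) => // f hf' y.
  by rewrite -hmod // /rc_lact /= big_cons big_nil addr0 hZ.
have : (1 : K^o) = 0 by apply: hinj => i x; rewrite hz h0.
by move/eqP; rewrite oner_eq0.
Qed.

Lemma rfqcF_disc : right_fqcF cC -> discrete Q.
Proof.
move=> hf a.
pose h := b (src a, [::]).
have Hh : teq2 (Delta cC h) [:: (h, h)] := HDelta (p := (src a, [::])) I.
have Heh : eps cC h = 1 := Heps (p := (src a, [::])) I.
have [I [phi [hl _ hadd hmod hinj]]] := hf (N1 Hh Heh) findimK.
have [h0 hZ] := fam0 hadd.
have hz : forall i x, phi 1 i x = 0.
  move=> i; apply: (@right_vanish a) => // f hf' y.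
  by rewrite -hmod // /lc_ract /= big_cons big_nil addr0 hZ.
have : (1 : K^o) = 0 by apply: hinj => i x; rewrite hz h0.
by move/eqP; rewrite oner_eq0.
Qed.

Section Cosemi.
Variable a : arr Q.
Let x : qpath Q := (src a, [:: a]).
Definition uc (c : K) (q : qpath Q) : K :=
  if all (fun a' => peq a' a) q.2 then c ^+ size q.2 else 0.
Definition Ec (c : K) (y : C) : K := eps cC y - c * delta x y.
Lemma Ec_lin c : linf (Ec c).
Proof.
move=> al y z; rewrite /Ec (eps_lin cC) delta_lin.
by rewrite mulrDr mulrBr mulrCA addrACA opprD.
Qed.

Lemma Ec_inv c y : cmul cC (Ec c) (Fu Hspan (uc c)) y = eps cC y.
Proof.
apply: (basis_eq Hspan y (cmul_lin (Ec_lin c) (Fu_lin Hind Hspan (uc c))) (eps_lin cC)).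
move=> [u s] hp; rewrite cmul_b //; last exact: (Fu_lin Hind Hspan); last exact: Ec_lin.
rewrite (@eq_sum_decomps _ _ (fun q => ((if q.1.2 is [::] then 1 else 0)
     - c * ind x q.1) * uc c q.2)) //; last first.
  by move=> q h1 h2; rewrite /Ec Heps // delta_b // (Fu_b Hind Hspan).
rewrite Heps // decomps_head big_cons /= ind_size // mulr0 subr0 mul1r.
case: s hp => [|a' s] hp /=.
  by rewrite big_nil addr0 /uc /= expr0.
rewrite big_cons /= take0 drop0 big_map big1_seq ?addr0; last first.
  move=> i /andP[_]; rewrite mem_iota => /andP[hi hi'] /=.
  rewrite ind_size ?mulr0 ?subr0 ?mul0r //= size_take.
  by case: ifP => h; move: hi hi' h; lia.
rewrite sub0r /uc /=; case: (peqP a' a) => [ea|na] /=.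
- subst a'; case: hp => /= hu _; rewrite /x hu ind_refl mulr1.
  by case: all; rewrite ?exprS ?mulNr ?addrN // mulr0 oppr0 addr0.
- rewrite /ind peqF ?mulr0 ?oppr0 ?mul0r ?addr0 //.
  by case=> _ e; apply: na.
Qed.

Lemma grouplike_t (P : C -> Prop) (s : C) (t : seq (C * C)) :
  (forall d, P d <-> exists al : K, d = al *: s) ->
  (forall p, p \in t -> P p.1 /\ P p.2) ->
  exists lam : K, forall f g, linf f -> linf g ->
    \sum_(p <- t) f p.1 * g p.2 = lam * (f s * g s).
Proof.
move=> hP; elim: t => [|p t IH] ht.
  by exists 0 => f g _ _; rewrite big_nil mul0r.
have [lam hlam] : exists lam : K, forall f g, linf f -> linf g ->
    \sum_(p <- t) f p.1 * g p.2 = lam * (f s * g s).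
  by apply: IH => q hq; apply: ht; rewrite in_cons hq orbT.
have [h1 h2] := ht p (mem_head _ _).
have [al e1] := (hP _).1 h1; have [be e2] := (hP _).1 h2.
exists (al * be + lam) => f g hf hg; rewrite big_cons hlam // e1 e2 !linfZ //.
by rewrite mulrDl mulrACA.
Qed.

Hypothesis Hpt : pointed cC.

Lemma simple_delta0 (P : C -> Prop) : simple_subcoalg cC P ->
  forall d, P d -> delta x d = 0.
Proof.
move=> hsP; have [s [hs0 hP]] := Hpt hsP.
have [[hsub hco] _ _] := hsP.
suff hs : delta x s = 0.
  by move=> d /hP [al ->]; rewrite linfZ ?hs ?mulr0 //; apply: delta_lin.
have [t [ht hteq]] := hco s ((hP s).2 (ex_intro _ 1 (esym (scale1r s)))).
have [lam hlam] := grouplike_t hP ht.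
have hD : forall f g, linf f -> linf g ->
    \sum_(p <- Delta cC s) f p.1 * g p.2 = lam * (f s * g s).
  by move=> f g hf hg; rewrite (teq2K hf hg hteq) hlam.
apply/eqP; apply/negP => /negP ht0.
have hle : lam * eps cC s = 1.
  have hc : \sum_(p <- Delta cC s) eps cC p.1 * delta x p.2 = delta x s.
    rewrite -{2}(counitl cC s) (linf_sum (F := delta x)); last exact: delta_lin.
    by apply: eq_bigr => p _; rewrite linfZ //; apply: delta_lin.
  have := hD _ _ (eps_lin cC) (delta_lin x); rewrite hc.
  move=> e; apply: (mulIf ht0); by rewrite mul1r -mulrA -e.
pose c := eps cC s / delta x s.
have := Ec_inv c s; rewrite /cmul hD; last exact: (Fu_lin Hind Hspan); last exact: Ec_lin.
have -> : Ec c s = 0 by rewrite /Ec /c divfK // subrr.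
rewrite mul0r mulr0 => e.
by move: hle; rewrite -e mulr0 => /eqP; rewrite eq_sym oner_eq0.
Qed.

Lemma cosemi_disc_a : cosemisimple cC -> False.
Proof.
move=> [I [S [hsimp hspanS _]]].
have [n [e [d [hd hx]]]] := hspanS (b x).
have : delta x (b x) = 0.
  rewrite hx linf_sum ?big1 //; last exact: delta_lin.
  by move=> k _; apply: (simple_delta0 (hsimp (e k))).
rewrite delta_b; last by split. by rewrite ind_refl => /eqP; rewrite oner_eq0.
Qed.
End Cosemi.

Lemma cosemi_disc : pointed cC -> cosemisimple cC -> discrete Q.
Proof. by move=> hpt hc a; apply: (cosemi_disc_a a hpt hc). Qed.

End Coal.


Section Sep.
Variables (K : fieldType) (M : lmodType K) (n : nat) (v : 'I_n -> M).

Definition Lr (r : 'rV[K]_n) : M := \sum_(k < n) r 0 k *: v k.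
Lemma LrD r1 r2 : Lr (r1 + r2) = Lr r1 + Lr r2.
Proof. by rewrite /Lr -big_split; apply: eq_bigr => k _; rewrite mxE scalerDl. Qed.
Lemma LrZ a r : Lr (a *: r) = a *: Lr r.
Proof. by rewrite /Lr scaler_sumr; apply: eq_bigr => k _; rewrite mxE scalerA. Qed.
Lemma Lr0 : Lr 0 = 0.
Proof. by rewrite /Lr big1 // => k _; rewrite mxE scale0r. Qed.
Lemma LrN r : Lr (- r) = - Lr r.
Proof. by rewrite -[- r]scaleN1r LrZ scaleN1r. Qed.

Definition goodA (A : 'M[K]_n) := forall u : 'rV_n, (u <= A)%MS -> Lr u = 0.

Lemma exA : exists A : 'M[K]_n, goodA A /\ forall u, Lr u = 0 -> (u <= A)%MS.
Proof.
apply: NNPP => hno.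
have step : forall A : 'M[K]_n, goodA A ->
    exists B : 'M[K]_n, goodA B /\ (\rank A < \rank B)%N.
  move=> A gA.
  have [u [hu nu]] : exists u, Lr u = 0 /\ ~~ (u <= A)%MS.
    apply: NNPP => hn; apply: hno; exists A; split=> // u hu.
    case: (boolP (u <= A)%MS) => // nu; exfalso; by apply: hn; exists u; split.
  exists (A + u)%MS; split.
  - move=> w /sub_addsmxP [[w1 w2] ->] /=.
    rewrite LrD gA ?submxMl // add0r.
    have /sub_rVP [a ->] : (w2 *m u <= u)%MS by apply: submxMl.
    by rewrite LrZ hu scaler0.
  - apply: rank_ltmx; rewrite ltmxE addsmxSl /=.
    apply/negP => h; move/negP: nu; apply.
    exact: submx_trans (addsmxSr _ _) h.
have : forall j, exists A : 'M[K]_n, goodA A /\ (j <= \rank A)%N.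
  elim => [|j [A [gA hj]]].
    by exists 0; split=> // u; rewrite submx0 => /eqP ->; rewrite Lr0.
  have [B [gB hB]] := step A gA; exists B; split => //.
  exact: leq_ltn_trans hj hB.
move/(_ n.+1) => [A [_ h]].
by move: (leq_trans h (rank_leq_col A)); rewrite ltnn.
Qed.
End Sep.

Lemma sep (K : fieldType) (M : lmodType K) : findim M ->
  exists n (th : 'I_n -> M -> K),
    (forall k, linf (th k)) /\ (forall m, (forall k, th k m = 0) -> m = 0).
Proof.
move=> [n [v hv]].
pose pre (m : M) : 'rV[K]_n :=
  \row_(k < n) proj1_sig (constructive_indefinite_description _ (hv m)) k.
have hpre : forall m, Lr v (pre m) = m.
  move=> m; rewrite /Lr /pre; case: constructive_indefinite_description => a ha /=.
  by rewrite [RHS]ha; apply: eq_bigr => k _; rewrite mxE.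
have [A [gA hA]] := exA v.
have hsub : forall r, Lr v r = 0 -> r *m cokermx A = 0.
  by move=> r /hA; rewrite submxE => /eqP.
exists n, (fun k m => (pre m *m cokermx A) 0 k); split.
- move=> k a x y.
  have e : (pre (a *: x + y) - (a *: pre x + pre y)) *m cokermx A = 0.
    by apply: hsub; rewrite LrD LrN LrD LrZ !hpre subrr.
  move/eqP: e; rewrite mulmxBl subr_eq0 => /eqP ->.
  by rewrite mulmxDl -scalemxAl !mxE.
- move=> m h.
  have : pre m *m cokermx A = 0.
    by apply/matrixP => i j; rewrite (ord1 i) h mxE.
  move/eqP; rewrite -submxE => /gA; rewrite hpre //.
Qed.


Section Disc.
Variables (K : fieldType) (C : lmodType K) (cC : coalg C) (Q : quiver)
  (b : qpath Q -> C).
Hypothesis Hind : forall n (e : 'I_n -> qpath Q) (a : 'I_n -> K),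
          injective e -> (forall k, valid_path (e k)) ->
          \sum_(k < n) a k *: b (e k) = 0 -> forall k, a k = 0.
Hypothesis Hspan : forall c : C, exists n (e : 'I_n -> qpath Q) (a : 'I_n -> K),
          (forall k, valid_path (e k)) /\ c = \sum_(k < n) a k *: b (e k).
Hypothesis HDelta : forall p, valid_path p ->
          teq2 (Delta cC (b p)) [seq (b x.1, b x.2) | x <- decomps p].
Hypothesis Heps : forall p, valid_path p -> eps cC (b p) = (if p.2 is [::] then 1 else 0).
Hypothesis Hdisc : discrete Q.

Local Notation ind := (ind K (Q:=Q)).
Local Notation delta := (delta Hspan).
Local Notation dlin := (delta_lin Hind Hspan).
Local Notation db := (delta_b Hind Hspan).

Lemma triv (q : qpath Q) : q = (q.1, [::]).
Proof. by case: q => v [|a s] //; case: (Hdisc a). Qed.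

Lemma lact_lin f : linf f -> lin (C_lact cC f).
Proof.
move=> hf a x y; rewrite /C_lact (teq2R hf (Delta_lin cC a x y)).
rewrite big_cat big_map /= scaler_sumr; congr (_ + _).
by apply: eq_bigr => p _; rewrite !scalerA mulrC.
Qed.
Lemma ract_lin f : linf f -> lin (fun c => C_ract cC c f).
Proof.
move=> hf a x y; rewrite /C_ract (teq2L hf (Delta_lin cC a x y)).
rewrite big_cat big_map /= scaler_sumr; congr (_ + _).
by apply: eq_bigr => p _; rewrite linfZ // -scalerA.
Qed.

Definition Phi (c : C) : C -> K := Fu Hspan (fun q => delta q c).

Lemma Phi_lin c : linf (Phi c). Proof. exact: Fu_lin. Qed.
Lemma Phi_add (a : K) c c' y : Phi (a *: c + c') y = a * Phi c y + Phi c' y.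
Proof.
rewrite /Phi /Fu /uv mulr_sumr -big_split; apply: eq_bigr => p _ /=.
by rewrite dlin mulrDr mulrCA.
Qed.
Lemma Phi_b c q : valid_path q -> Phi c (b q) = delta q c.
Proof. by move=> hq; rewrite /Phi (Fu_b Hind). Qed.

Lemma delta_act (f : C -> K) (T : C -> C) r c : linf f -> lin T ->
  (forall v, T (b (v, [::])) = f (b (v, [::])) *: b (v, [::])) ->
  delta (r, [::]) (T c) = f (b (r, [::])) * delta (r, [::]) c.
Proof.
move=> hf hT hTb.
have hl1 : linf (fun c => delta (r, [::]) (T c)).
  by move=> a x y; rewrite hT dlin.
have hl2 : linf (fun c => f (b (r, [::])) * delta (r, [::]) c).
  by move=> a x y; rewrite dlin mulrDr mulrCA.
apply: (basis_eq Hspan c hl1 hl2) => q hq.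
rewrite (triv q) hTb linfZ ?db //; last exact: dlin.
rewrite /ind; case: (peqP (q.1, [::]) (r, [::])) => [[->]|]; rewrite ?mulr0 //.
Qed.

Lemma Phi_lmod f c y : linf f -> Phi (C_lact cC f c) y = cmul cC f (Phi c) y.
Proof.
move=> hf.
apply: (basis_eq Hspan y (Phi_lin _) (cmul_lin cC hf (Phi_lin c))) => q hq.
rewrite (triv q) Phi_b // (cmul_b HDelta) //; last exact: Phi_lin.
rewrite /decomps /= big_cons big_nil addr0 Phi_b //.
by apply: delta_act => //; [exact: lact_lin | move=> v; apply: lact_triv].
Qed.

Lemma Phi_rmod f c y : linf f -> Phi (C_ract cC c f) y = cmul cC (Phi c) f y.
Proof.
move=> hf.
apply: (basis_eq Hspan y (Phi_lin _) (cmul_lin cC (Phi_lin c) hf)) => q hq.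
rewrite (triv q) Phi_b // (cmul_b HDelta) //; last exact: Phi_lin.
rewrite /decomps /= big_cons big_nil addr0 Phi_b // mulrC.
by apply: (delta_act (T := fun c => C_ract cC c f)) => //;
  [exact: ract_lin | move=> v; apply: ract_triv].
Qed.

Lemma Phi_inj c c' : (forall y, Phi c y = Phi c' y) -> c = c'.
Proof.
move=> h; apply/eqP; rewrite -subr_eq0; apply/eqP.
apply: (@coord_zero _ _ _ _ Hspan (c - c')) => q hq.
have := h (b q); rewrite !Phi_b // => e.
rewrite -/(delta q (c - c')) -[- c']scaleN1r linfD ?linfZ ?e ?mulN1r ?subrr //;
  exact: dlin.
Qed.

Lemma disc_cofrob : coFrobenius cC.
Proof.
exists Phi; split.
- exact: Phi_lin.
- exact: Phi_add.
- by move=> f c x hf; apply: Phi_lmod.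
- exact: Phi_inj.
Qed.

Lemma unit_supp (phi : C -> unit -> C -> K) : forall m : C, exists n (e : 'I_n -> unit),
  forall i, (forall k, e k <> i) -> forall x, phi m i x = 0.
Proof. by move=> m; exists 1%N, (fun _ => tt) => -[] /(_ ord0). Qed.

Lemma disc_lqcF : left_qcF cC.
Proof.
exists unit, (fun c _ => Phi c); split.
- by move=> m _; exact: Phi_lin.
- exact: unit_supp.
- by move=> a m m' _ x; apply: Phi_add.
- by move=> f c _ x hf; apply: Phi_lmod.
- by move=> m m' h; apply: Phi_inj => y; apply: h tt y.
Qed.

Lemma disc_rqcF : right_qcF cC.
Proof.
exists unit, (fun c _ => Phi c); split.
- by move=> m _; exact: Phi_lin.
- exact: unit_supp.
- by move=> a m m' _ x; apply: Phi_add.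
- by move=> f c _ x hf; apply: Phi_rmod.
- by move=> m m' h; apply: Phi_inj => y; apply: h tt y.
Qed.

Lemma Delta0 (W : lmodType K) (be : C -> C -> W) : bilin be ->
  \sum_(p <- Delta cC 0) be p.1 p.2 = 0.
Proof.
move=> hb; have := Delta_lin cC 1 0 0 hb; rewrite scale1r addr0 big_cat big_map /=.
under [X in _ = X + _]eq_bigr do rewrite scale1r.
by move=> e; apply: (addrI (\sum_(p <- Delta cC 0) be p.1 p.2)); rewrite addr0 -e.
Qed.

Lemma teq_scale (al : K) g : teq2 (Delta cC g) [:: (g, g)] ->
  teq2 (Delta cC (al *: g)) [:: (al *: g, g)].
Proof.
move=> hg W be hb; have := Delta_lin cC al g 0 hb; rewrite addr0 => ->.
rewrite big_cat /= (Delta0 hb) addr0 big_map /= big_cons big_nil addr0.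
have [hb1 _] := hb.
under eq_bigr do rewrite (linZ _ _ (hb1 _)).
by rewrite -scaler_sumr (hg W be hb) big_cons big_nil addr0 (linZ _ _ (hb1 _)).
Qed.

Definition Sv (v : vert Q) (c : C) := exists al : K, c = al *: b (v, [::]).

Lemma Sv_simple v : simple_subcoalg cC (Sv v).
Proof.
have hg : teq2 (Delta cC (b (v, [::]))) [:: (b (v, [::]), b (v, [::]))] :=
  HDelta (p := (v, [::])) I.
split.
- split.
  + split; first by exists 0; rewrite scale0r.
    by move=> a x y [al ->] [be ->]; exists (a * al + be); rewrite scalerDl scalerA.
  + move=> d [al ->]; exists [:: (al *: b (v, [::]), b (v, [::]))]; split.
      move=> p; rewrite inE => /eqP -> /=; split; [by exists al|by exists 1; rewrite scale1r].
    exact: teq_scale.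
- exists (b (v, [::])); split; first by exists 1; rewrite scale1r.
  exact: (b_neq0 Hind).
- move=> E [[hE0 hEc] _] hES.
  case: (classic (exists x, E x /\ x <> 0)) => [[x [hEx hx0]]|hn]; last first.
    by left => x hx; apply: NNPP => hne; apply: hn; exists x.
  right.
  have [al ex] := hES x hEx.
  have al0 : al != 0 by apply: contra_notN hx0 => /eqP al0; rewrite ex al0 scale0r.
  move=> y [be ->].
  have -> : be *: b (v, [::]) = (be / al) *: x + 0.
    by rewrite addr0 ex scalerA divfK.
  by apply: hEc.
Qed.

Lemma disc_cosemi : cosemisimple cC.
Proof.
exists (vert Q), Sv; split.
- exact: Sv_simple.
- move=> c; have [n [e [a [hv ->]]]] := Hspan c.
  exists n, (fun k => (e k).1), (fun k => a k *: b (e k)); split=> // k.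
  by exists (a k); rewrite {1}(triv (e k)).
- move=> n e d he hS hsum k.
  pose al k := proj1_sig (constructive_indefinite_description _ (hS k)).
  have hal : forall k, d k = al k *: b (e k, [::]).
    by move=> j; rewrite /al; case: constructive_indefinite_description.
  have : al k = 0.
    apply: (Hind (e := fun j => (e j, [::]))) => //.
    + by move=> i j [/he].
    + by apply: etrans _ hsum; apply: eq_bigr => j _; rewrite hal.
  by rewrite hal => ->; rewrite scale0r.
Qed.

Lemma disc_lfqcF : left_fqcF cC.
Proof.
move=> M hM.
have [n [th [hth hsep]]] := sep hM.
pose psi k (m : rc_sort M) : C := \sum_(p <- rc_rho m) th k p.1 *: p.2.
have psi_lin : forall k, lin (psi k).
  move=> k a x y; rewrite /psi (teq2L (hth k) (rc_rho_lin a x y)).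
  rewrite big_cat big_map /= scaler_sumr; congr (_ + _).
  by apply: eq_bigr => p _; rewrite linfZ // scalerA.
have psi_act : forall k f m, linf f -> psi k (rc_lact f m) = C_lact cC f (psi k m).
  move=> k f m hf.
  have hg : trilin (fun (x : rc_sort M) (c d : C) => (th k x * f d) *: c).
    split.
    - by move=> c d a x y; rewrite hth mulrDl scalerDl -mulrA scalerA.
    - by move=> x d a c c'; rewrite scalerDr !scalerA [_ * a]mulrC.
    - by move=> x c a d d'; rewrite hf mulrDr scalerDl mulrCA scalerA.
  have hc := rc_coassoc m hg.
  rewrite !big_flatten /= !big_map /= in hc.
  rewrite /rc_lact (lin_sum _ _ (psi_lin k)) /psi.
  rewrite (lin_sum _ _ (lact_lin hf)).
  transitivity (\sum_(i <- rc_rho m)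
     \sum_(j <- rc_rho i.1) (th k j.1 * f i.2) *: j.2).
    apply: eq_bigr => p _; rewrite -/(psi k (f p.2 *: p.1)) (linZ _ _ (psi_lin k)) /psi scaler_sumr.
    by apply: eq_bigr => q _; rewrite scalerA mulrC.
  apply: etrans (etrans _ hc) _.
    by apply: eq_bigr => i _; rewrite big_map.
  apply: eq_bigr => p _; rewrite big_map (linZ _ _ (lact_lin hf)) /C_lact scaler_sumr.
  by apply: eq_bigr => q _; rewrite scalerA.
have eps_psi : forall k m, eps cC (psi k m) = th k m.
  move=> k m; rewrite /psi (linf_sum _ _ (eps_lin cC)).
  rewrite -{2}(rc_counit m) (linf_sum _ _ (hth k)).
  by apply: eq_bigr => p _; rewrite (linfZ _ _ (eps_lin cC)) (linfZ _ _ (hth k)) mulrC.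
exists 'I_n, (fun m k => Phi (psi k m)); split.
- by move=> m k; exact: Phi_lin.
- by move=> m; exists n, id => i /(_ i).
- by move=> a m m' i x; rewrite psi_lin Phi_add.
- by move=> f m i x hf; rewrite psi_act // Phi_lmod.
- move=> m m' h.
  have e : forall k, th k m = th k m'.
    by move=> k; rewrite -!eps_psi (Phi_inj (h k)).
  apply/eqP; rewrite -subr_eq0; apply/eqP; apply: hsep => k.
  by rewrite -[- m']scaleN1r (linfD _ _ (hth k)) (linfZ _ _ (hth k)) e mulN1r subrr.
Qed.

Lemma disc_rfqcF : right_fqcF cC.
Proof.
move=> N hN.
have [n [th [hth hsep]]] := sep hN.
pose psi k (m : lc_sort N) : C := \sum_(p <- lc_rho m) th k p.2 *: p.1.
have psi_lin : forall k, lin (psi k).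
  move=> k a x y; rewrite /psi (teq2R (hth k) (lc_rho_lin a x y)).
  rewrite big_cat big_map /= scaler_sumr; congr (_ + _).
  by apply: eq_bigr => p _; rewrite linfZ // scalerA.
have psi_act : forall k f m, linf f -> psi k (lc_ract m f) = C_ract cC (psi k m) f.
  move=> k f m hf.
  have hg : trilin (fun (c d : C) (x : lc_sort N) => (f c * th k x) *: d).
    split.
    - by move=> d x a c c'; rewrite hf mulrDl scalerDl -mulrA scalerA.
    - by move=> c x a d d'; rewrite scalerDr !scalerA [_ * a]mulrC.
    - by move=> c d a x y; rewrite hth mulrDr scalerDl mulrCA scalerA.
  have hc := lc_coassoc m hg.
  rewrite !big_flatten /= !big_map /= in hc.
  rewrite /lc_ract (lin_sum _ _ (psi_lin k)) /psi.
  rewrite (lin_sum _ _ (ract_lin hf)).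
  transitivity (\sum_(i <- lc_rho m)
     \sum_(j <- lc_rho i.2) (f i.1 * th k j.2) *: j.1).
    apply: eq_bigr => p _; rewrite -/(psi k (f p.1 *: p.2)) (linZ _ _ (psi_lin k)) /psi scaler_sumr.
    by apply: eq_bigr => q _; rewrite scalerA.
  apply: etrans (etrans _ (esym hc)) _.
    by apply: eq_bigr => i _; rewrite big_map.
  apply: eq_bigr => p _; rewrite big_map.
  rewrite (linZ _ _ (ract_lin hf)) /C_ract scaler_sumr.
  by apply: eq_bigr => q _; rewrite scalerA mulrC.
have eps_psi : forall k m, eps cC (psi k m) = th k m.
  move=> k m; rewrite /psi (linf_sum _ _ (eps_lin cC)).
  rewrite -{2}(lc_counit m) (linf_sum _ _ (hth k)).
  by apply: eq_bigr => p _; rewrite (linfZ _ _ (eps_lin cC)) (linfZ _ _ (hth k)) mulrC.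
exists 'I_n, (fun m k => Phi (psi k m)); split.
- by move=> m k; exact: Phi_lin.
- by move=> m; exists n, id => i /(_ i).
- by move=> a m m' i x; rewrite psi_lin Phi_add.
- by move=> f m i x hf; rewrite psi_act // Phi_rmod.
- move=> m m' h.
  have e : forall k, th k m = th k m'.
    by move=> k; rewrite -!eps_psi (Phi_inj (h k)).
  apply/eqP; rewrite -subr_eq0; apply/eqP; apply: hsep => k.
  by rewrite -[- m']scaleN1r (linfD _ _ (hth k)) (linfZ _ _ (hth k)) e mulN1r subrr.
Qed.

End Disc.

Unset Implicit Arguments.

Theorem corollary4p15 (K : fieldType) (C : lmodType K) (cC : coalg C)
  (Q : quiver) (HQ : iso_path_coalg cC Q)
  (Hher : hereditary cC) (Hpt : pointed cC) :
  [<-> left_fqcF cC; right_fqcF cC; left_qcF cC; right_qcF cC;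
       coFrobenius cC; cosemisimple cC; discrete Q].
Proof.
case: HQ => b [Hind Hspan HDelta Heps].
have n1 : left_fqcF cC -> discrete Q := (lfqcF_disc Hind Hspan HDelta Heps).
have n2 : right_fqcF cC -> discrete Q := (rfqcF_disc Hind Hspan HDelta Heps).
have n3 : left_qcF cC -> discrete Q := (lqcF_disc Hind Hspan HDelta).
have n4 : right_qcF cC -> discrete Q := (rqcF_disc Hind Hspan HDelta).
have n5 : coFrobenius cC -> discrete Q := (cofrob_disc Hind Hspan HDelta).
have n6 : cosemisimple cC -> discrete Q := (cosemi_disc Hind Hspan HDelta Heps Hpt).
tfae.
- by move/n1 => hd; exact: (disc_rfqcF Hind Hspan HDelta hd).
- by move/n2 => hd; exact: (disc_lqcF Hind Hspan HDelta hd).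
- by move/n3 => hd; exact: (disc_rqcF Hind Hspan HDelta hd).
- by move/n4 => hd; exact: (disc_cofrob Hind Hspan HDelta hd).
- by move/n5 => hd; exact: (disc_cosemi Hind Hspan HDelta hd).
- exact: n6.
- by move=> hd; exact: (disc_lfqcF Hind Hspan HDelta hd).
Qed.
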